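(* In the polar Brauer category $\mathcal{AB}(\delta)$ (over a commutative ring $K$, $\delta\in K$), the identity $[\mathbb H_{01}+\mathbb H_{02},\mathbb H_{12}]=0$ holds in $\mathrm{End}_{\mathcal{AB}(\delta)}(2)$.
   Context: Let $K$ be a commutative ring and $\delta\in K$. The Brauer category $\mathcal B(\delta)$ has objects $\mathbb N$; $\mathrm{Hom}_{\mathcal B(\delta)}(r,s)$ is the free $K$-module on Brauer $(r,s)$-diagrams; composition $BA$ (first $A$, then $B$) is stacking with closed loops replaced by a factor $\delta$; $\otimes$ is juxtaposition. $I$ is the identity of $1$, $I_r=I^{\otimes r}$, $X$ the crossing, $\cap:2\to0$ the cap, $\cup:0\to2$ the cup, $H=X-\cup\circ\cap$. The polar Brauer category $\mathcal{AB}(\delta)$ is the $K$-linear category with objects $\mathbb N$ generated, under composition and the right action $\mathbb D\mapsto\mathbb D\otimes B$ of morphisms $B$ of $\mathcal B(\delta)$ (juxtaposing $B$ on the right; $\mathbb D:r\to s$, $B:k\to\ell$ give $\mathbb D\otimes B:r+k\to s+\ell$), by $\mathbb I_0$ (a vertical pole, identity of $0$) and $\mathbb H:1\to1$ (pole joined by a horizontal connector to one thin strand), subject to: (i) $(\mathbb I_0\otimes B)(\mathbb I_0\otimes A)=\mathbb I_0\otimes BA$, $(\mathbb H\otimes B)(\mathbb I_1\otimes A)=(\mathbb I_1\otimes B)(\mathbb H\otimes A)=\mathbb H\otimes BA$, with $\mathbb I_r=\mathbb I_0\otimes I_r$; (ii) $[\mathbb H_{01},\mathbb H_{02}+\mathbb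 H_{12}]=0$ with $[a,b]=ab-ba$, $\mathbb H_{01}=\mathbb H\otimes I$, $\mathbb X_0=\mathbb I_0\otimes X$, $\mathbb H_{02}=\mathbb X_0\mathbb H_{01}\mathbb X_0$, $\mathbb H_{12}=\mathbb I_0\otimes H$; (iii) $\mathbb H^T=-\mathbb H$ where $\mathbb D^T=(\mathbb I_0\otimes\cap\otimes I)(\mathbb D\otimes X)(\mathbb I_0\otimes\cup\otimes I)$ for $\mathbb D:1\to1$; relations are imposed in all composites and right tensor products. Products of morphisms denote composition. *)

(* Defs.v *)
From mathcomp Require Import all_boot all_order all_algebra.
Set Implicit Arguments.
Unset Strict Implicit.
Unset Printing Implicit Defensive.
Import GRing.Theory.

(* An (r,s)-Brauer diagram is a perfect matching of the r+s points           *)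
(* 'I_(r+s): points 0..r-1 are the source (bottom) points, points            *)
(* r..r+s-1 the target (top) points, both read from left to right.           *)

Definition is_diag n (f : {ffun 'I_n -> 'I_n}) : bool :=
  [forall x, (f x != x) && (f (f x) == x)].

Definition diagram (r s : nat) := {f : {ffun 'I_(r + s) -> 'I_(r + s)} | is_diag f}.

(* the ordinal of 'I_n with value m, if m < n (a computable insub) *)
Definition ord_opt n (m : nat) : option 'I_n :=
  (if (m < n)%N as b return (m < n)%N = b -> option 'I_n
   then fun H => Some (Ordinal H) else fun _ => None) erefl.

(* reading a function on 'I_n as a function on nat (identity outside)   *)
Definition fnat n (f : {ffun 'I_n -> 'I_n}) (m : nat) : nat :=
  if ord_opt n m is Some i then val (f i) else m.

(* building a function on 'I_n from a function on nat (values out of    *)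
(* range are replaced by the argument; never happens below)              *)
Definition mkf n (g : nat -> nat) : {ffun 'I_n -> 'I_n} :=
  [ffun p : 'I_n => odflt p (ord_opt n (g p))].

(* Juxtaposition of an (r,s)-diagram fA (left) and a (k,l)-diagram fB       *)
(* (right), giving an (r+k, s+l)-diagram.                                   *)
Definition tens_fun r s k l (fA : {ffun 'I_(r + s) -> 'I_(r + s)})
    (fB : {ffun 'I_(k + l) -> 'I_(k + l)}) :
    {ffun 'I_(r + k + (s + l)) -> 'I_(r + k + (s + l))} :=
  let posA x := if (x < r)%N then x else (x + k)%N in
  let posB y := if (y < k)%N then (r + y)%N else (y + r + s)%N in
  mkf _ (fun p =>
    if p < r then posA (fnat fA p)
    else if p < r + k then posB (fnat fB (p - r))
    else if p < r + k + s then posA (fnat fA (p - k))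
    else posB (fnat fB (p - r - s)))%N.

(* Stacking: fA an (r,s)-diagram, fB an (s,t)-diagram (fB on top of fA).    *)
(* The stacked picture has vertices 'I_(r+s+t): vertex u < r+s is point u   *)
(* of fA, vertex u >= r is point u-r of fB (middle vertices are shared).    *)
Section Stacking.
Variables (r s t : nat) (fA : {ffun 'I_(r + s) -> 'I_(r + s)})
          (fB : {ffun 'I_(s + t) -> 'I_(s + t)}).

Definition cedge : rel 'I_(r + s + t) := fun u v =>
  ((u < r + s) && (fnat fA u == v)) || ((r <= u) && (fnat fB (u - r) + r == v))%N.

Definition cconn (m m' : nat) : bool :=
  [exists u : 'I_(r + s + t), [exists v : 'I_(r + s + t),
     [&& val u == m, val v == m' & connect cedge u v]]].

(* position of a point of the composite diagram among the vertices *)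
Definition cvtx (p : nat) : nat := if (p < r)%N then p else (p + s)%N.

Definition comp_fun : {ffun 'I_(r + t) -> 'I_(r + t)} :=
  [ffun p : 'I_(r + t) =>
     odflt p [pick q : 'I_(r + t) | (q != p) && cconn (cvtx p) (cvtx q)]].

(* number of closed loops: connected components consisting only of middle  *)
(* vertices (each counted once, via its least vertex)                      *)
Definition loops : nat :=
  #|[set u : 'I_(r + s + t) | ((r <= u < r + s)%N) &&
      [forall v, connect cedge u v ==> ((r <= v < r + s)%N && (u <= v)%N)]]|.

End Stacking.

(* The Brauer category B(delta): Hom(r,s) = free K-module on Brauer         *)
(* (r,s)-diagrams, realised as coefficient functions.                        *)
Section Brauer.
Variables (K : comPzRingType) (delta : K).

Definition Bhom (r s : nat) := {ffun diagram r s -> K}.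

Definition badd r s (a b : Bhom r s) : Bhom r s := [ffun d => (a d + b d)%R].
Definition bscale r s (c : K) (a : Bhom r s) : Bhom r s := [ffun d => (c * a d)%R].

(* composition b a : first a, then b; closed loops give a factor delta *)
Definition bcomp r s t (b : Bhom s t) (a : Bhom r s) : Bhom r t :=
  [ffun e : diagram r t =>
     (\sum_(d1 : diagram r s) \sum_(d2 : diagram s t)
       if comp_fun (val d1) (val d2) == val e
       then b d2 * a d1 * delta ^+ loops (val d1) (val d2) else 0)%R].

Definition btens r s k l (a : Bhom r s) (b : Bhom k l) : Bhom (r + k) (s + l) :=
  [ffun e : diagram (r + k) (s + l) =>
     (\sum_(d1 : diagram r s) \sum_(d2 : diagram k l)
       if tens_fun (val d1) (val d2) == val e then a d1 * b d2 else 0)%R].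

Definition bof r s (g : nat -> nat) : Bhom r s :=
  [ffun d : diagram r s => ((val d == mkf (r + s) g) : nat)%:R%R].

Definition bId r : Bhom r r :=
  bof r r (fun p => if (p < r)%N then (p + r)%N else (p - r)%N).
Definition bI : Bhom 1 1 := bId 1.
(* X : crossing, source 0 -- target 1, source 1 -- target 0 *)
Definition bX : Bhom 2 2 := bof 2 2 (fun p => (3 - p)%N).
Definition bcap : Bhom 2 0 := bof 2 0 (fun p => (1 - p)%N).
Definition bcup : Bhom 0 2 := bof 0 2 (fun p => (1 - p)%N).
Definition bH : Bhom 2 2 := badd bX (bscale (-1)%R (bcomp bcup bcap)).

End Brauer.

(* The polar Brauer category AB(delta), by generators and relations.         *)
(* Morphisms r -> s are formal expressions (abterm r s) modulo the least     *)
(* congruence (abeq) containing the axioms of a K-linear category, of a      *)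
(* (K-bilinear, associative, unital, functorial) right action of B(delta),   *)
(* and the relations (i), (ii), (iii).                                       *)

Inductive abterm (K : comPzRingType) : nat -> nat -> Type :=
| AI0 : abterm K 0 0
| AH : abterm K 1 1
| Acomp r s t : abterm K s t -> abterm K r s -> abterm K r t (* BA: first A *)
| Atens r s k l : abterm K r s -> Bhom K k l -> abterm K (r + k) (s + l)
| Azero r s : abterm K r s
| Aadd r s : abterm K r s -> abterm K r s -> abterm K r s
| Ascale r s : K -> abterm K r s -> abterm K r s.

Arguments AI0 {K}.
Arguments AH {K}.
Arguments Azero {K r s}.

Definition tcast (K : comPzRingType) r s r' s' (er : r = r') (es : s = s')
  (a : abterm K r s) : abterm K r' s' :=
  match er in _ = r0, es in _ = s0 return abterm K r0 s0 with
  | erefl, erefl => a end.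

Section ABdefs.
Variables (K : comPzRingType) (delta : K).

Definition AId r : abterm K r r := Atens AI0 (bId K r).
Definition Acomm r (a b : abterm K r r) : abterm K r r :=
  Aadd (Acomp a b) (Ascale (-1)%R (Acomp b a)).

Definition AH01 : abterm K 2 2 := Atens AH (bI K).
Definition AX0 : abterm K 2 2 := Atens AI0 (bX K).
Definition AH02 : abterm K 2 2 := Acomp AX0 (Acomp AH01 AX0).
Definition AH12 : abterm K 2 2 := Atens AI0 (bH delta).

Definition Atransp (D : abterm K 1 1) : abterm K 1 1 :=
  @Acomp K 1 3 1 (Atens AI0 (btens (bcap K) (bI K)))
    (@Acomp K 1 3 3 (Atens D (bX K)) (Atens AI0 (btens (bcup K) (bI K)))).

End ABdefs.

Inductive abeq (K : comPzRingType) (delta : K) :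
    forall r s, abterm K r s -> abterm K r s -> Prop :=
| abeq_refl r s (a : abterm K r s) : abeq delta a a
| abeq_sym r s (a b : abterm K r s) : abeq delta a b -> abeq delta b a
| abeq_trans r s (a b c : abterm K r s) :
    abeq delta a b -> abeq delta b c -> abeq delta a c
| abeq_comp r s t (a a' : abterm K s t) (b b' : abterm K r s) :
    abeq delta a a' -> abeq delta b b' -> abeq delta (Acomp a b) (Acomp a' b')
| abeq_tens r s k l (a a' : abterm K r s) (B : Bhom K k l) :
    abeq delta a a' -> abeq delta (Atens a B) (Atens a' B)
| abeq_add r s (a a' b b' : abterm K r s) :
    abeq delta a a' -> abeq delta b b' -> abeq delta (Aadd a b) (Aadd a' b')
| abeq_scale r s (c : K) (a a' : abterm K r s) :
    abeq delta a a' -> abeq delta (Ascale c a) (Ascale c a')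
| abeq_addA r s (a b c : abterm K r s) :
    abeq delta (Aadd a (Aadd b c)) (Aadd (Aadd a b) c)
| abeq_addC r s (a b : abterm K r s) : abeq delta (Aadd a b) (Aadd b a)
| abeq_add0 r s (a : abterm K r s) : abeq delta (Aadd a Azero) a
| abeq_addN r s (a : abterm K r s) :
    abeq delta (Aadd a (Ascale (-1)%R a)) Azero
| abeq_scaleA r s (c d : K) (a : abterm K r s) :
    abeq delta (Ascale (c * d)%R a) (Ascale c (Ascale d a))
| abeq_scale1 r s (a : abterm K r s) : abeq delta (Ascale 1%R a) a
| abeq_scaleDr r s (c : K) (a b : abterm K r s) :
    abeq delta (Ascale c (Aadd a b)) (Aadd (Ascale c a) (Ascale c b))
| abeq_scaleDl r s (c d : K) (a : abterm K r s) :
    abeq delta (Ascale (c + d)%R a) (Aadd (Ascale c a) (Ascale d a))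
| abeq_compA r s t u (a : abterm K t u) (b : abterm K s t) (c : abterm K r s) :
    abeq delta (Acomp a (Acomp b c)) (Acomp (Acomp a b) c)
| abeq_idl r s (a : abterm K r s) : abeq delta (Acomp (AId K s) a) a
| abeq_idr r s (a : abterm K r s) : abeq delta (Acomp a (AId K r)) a
| abeq_compDl r s t (a b : abterm K s t) (c : abterm K r s) :
    abeq delta (Acomp (Aadd a b) c) (Aadd (Acomp a c) (Acomp b c))
| abeq_compDr r s t (a : abterm K s t) (b c : abterm K r s) :
    abeq delta (Acomp a (Aadd b c)) (Aadd (Acomp a b) (Acomp a c))
| abeq_compZl r s t (k : K) (a : abterm K s t) (b : abterm K r s) :
    abeq delta (Acomp (Ascale k a) b) (Ascale k (Acomp a b))
| abeq_compZr r s t (k : K) (a : abterm K s t) (b : abterm K r s) :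
    abeq delta (Acomp a (Ascale k b)) (Ascale k (Acomp a b))
| abeq_tensDl r s k l (a b : abterm K r s) (B : Bhom K k l) :
    abeq delta (Atens (Aadd a b) B) (Aadd (Atens a B) (Atens b B))
| abeq_tensZl r s k l (c : K) (a : abterm K r s) (B : Bhom K k l) :
    abeq delta (Atens (Ascale c a) B) (Ascale c (Atens a B))
| abeq_tensDr r s k l (a : abterm K r s) (B B' : Bhom K k l) :
    abeq delta (Atens a (badd B B')) (Aadd (Atens a B) (Atens a B'))
| abeq_tensZr r s k l (c : K) (a : abterm K r s) (B : Bhom K k l) :
    abeq delta (Atens a (bscale c B)) (Ascale c (Atens a B))
| abeq_tensA r s k l k' l' (a : abterm K r s) (B : Bhom K k l) (B' : Bhom K k' l') :
    abeq delta (tcast (esym (addnA r k k')) (esym (addnA s l l')) (Atens (Atens a B) B'))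
               (Atens a (btens B B'))
| abeq_tens1 r s (a : abterm K r s) :
    abeq delta (tcast (addn0 r) (addn0 s) (Atens a (bId K 0))) a
| abeq_interchange r s t j k l (a : abterm K s t) (b : abterm K r s)
    (B : Bhom K k l) (A : Bhom K j k) :
    abeq delta (Acomp (Atens a B) (Atens b A)) (Atens (Acomp a b) (bcomp delta B A))
| abeq_i0 j k l (B : Bhom K k l) (A : Bhom K j k) :
    abeq delta (Acomp (Atens AI0 B) (Atens AI0 A)) (Atens AI0 (bcomp delta B A))
| abeq_i1 j k l (B : Bhom K k l) (A : Bhom K j k) :
    abeq delta (Acomp (Atens AH B) (Atens (AId K 1) A)) (Atens AH (bcomp delta B A))
| abeq_i2 j k l (B : Bhom K k l) (A : Bhom K j k) :
    abeq delta (Acomp (Atens (AId K 1) B) (Atens AH A)) (Atens AH (bcomp delta B A))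
| abeq_ii : abeq delta (Acomm (AH01 K) (Aadd (AH02 K) (AH12 delta))) Azero
| abeq_iii : abeq delta (Atransp AH) (Ascale (-1)%R AH).

(* Main.v *)
Require Import Defs.
From mathcomp Require Import all_boot all_order all_algebra.
Set Implicit Arguments. Unset Strict Implicit. Unset Printing Implicit Defensive.
Import GRing.Theory.

Lemma ord_opt_some n m (H : (m < n)%N) : ord_opt n m = Some (Ordinal H).
Proof.
rewrite /ord_opt.
have e : forall (b : bool) (E : (m < n)%N = b),
  (if b as b' return ((m < n)%N = b' -> option 'I_n) then fun H => Some (Ordinal H)
   else fun _ => None) E = Some (Ordinal H).
  case=> E; last by rewrite H in E.
  by congr Some; apply: val_inj.
exact: e.
Qed.

Lemma mkfE n (g : nat -> nat) (i : 'I_n) : (g i < n)%N -> val (mkf n g i) = g i.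
Proof. by move=> H; rewrite /mkf ffunE (ord_opt_some H). Qed.

Lemma fnat_mkf n (g : nat -> nat) m : (m < n)%N -> (g m < n)%N -> fnat (mkf n g) m = g m.
Proof. by move=> Hm Hg; rewrite /fnat (ord_opt_some Hm) mkfE. Qed.

Definition allN N (P : pred nat) := all P (iota 0 N).
Lemma allNP N P : allN N P -> forall m, (m < N)%N -> P m.
Proof. by move=> /allP H m Hm; apply: H; rewrite mem_iota. Qed.

Definition ced r s (gA gB : nat -> nat) (a b : nat) : bool :=
  ((a < r + s) && (gA a == b)) || ((r <= a) && (gB (a - r) + r == b))%N.

Section Gen.
Variables (r s t : nat) (gA gB : nat -> nat).
Hypothesis HA : allN (r + s) (fun m => gA m < r + s)%N.
Hypothesis HB : allN (s + t) (fun m => gB m < s + t)%N.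

Lemma cedgeE (u v : 'I_(r + s + t)) :
  cedge (mkf (r + s) gA) (mkf (s + t) gB) u v = ced r s gA gB u v.
Proof.
rewrite /cedge /ced.
have eA : (u < r + s)%N -> fnat (mkf (r + s) gA) u = gA u.
  by move=> h; rewrite fnat_mkf //; apply: (allNP HA).
have eB : (r <= u)%N -> fnat (mkf (s + t) gB) (u - r) = gB (u - r).
  move=> h; have h3 : (u - r < s + t)%N by rewrite ltn_subLR // addnA.
  by rewrite fnat_mkf //; apply: (allNP HB).
case: (ltnP u (r + s)) => h1 /=; first rewrite eA //.
  by case: (leqP r u) => h2 //=; rewrite eB.
by case: (leqP r u) => h2 //=; rewrite eB.
Qed.

Variables (cid nxt : nat -> nat).
Let N := (r + s + t)%N.
Hypothesis Hcl : allN N (fun a => allN N (fun b => ced r s gA gB a b ==> (cid a == cid b))).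
Hypothesis Hsym : allN N (fun a => allN N (fun b => ced r s gA gB a b ==> ced r s gA gB b a)).
Hypothesis Hnx : allN N (fun a => (nxt a < N)%N && ((nxt a == a) || ced r s gA gB a (nxt a))).
Hypothesis Hrt : allN N (fun a => allN N (fun b => (cid a == cid b) ==> (iter N nxt a == iter N nxt b))).

Lemma connectE (u v : 'I_(r + s + t)) :
  connect (cedge (mkf (r + s) gA) (mkf (s + t) gB)) u v = (cid u == cid v).
Proof.
pose e : rel 'I_(r + s + t) := fun a b => ced r s gA gB a b.
rewrite (@eq_connect _ _ e); last by move=> a b; rewrite cedgeE.
have esym : symmetric e.
  move=> a b; rewrite /e; apply/idP/idP => h.
    by have := allNP (allNP Hsym (ltn_ord a)) (ltn_ord b); rewrite h.
  by have := allNP (allNP Hsym (ltn_ord b)) (ltn_ord a); rewrite h.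
apply/idP/idP.
  move/connectP => [p pth ->]; elim: p u pth => [|w p IH] u //= /andP[e1 pth].
  have := allNP (allNP Hcl (ltn_ord u)) (ltn_ord w); rewrite /e in e1; rewrite e1 /= => /eqP ->.
  exact: IH.
have Hk : forall k (a : 'I_(r + s + t)), exists b : 'I_(r + s + t),
    val b = iter k nxt a /\ connect e a b.
  elim=> [|k IH] a; first by exists a; split => //; apply: connect0.
  have [b [vb cb]] := IH a.
  have := allNP Hnx (ltn_ord b); case/andP => hb hc.
  exists (Ordinal hb); split; first by rewrite iterS -vb.
  apply: (connect_trans cb); case/orP: hc => hc.
    by apply: eq_connect0; apply: val_inj; rewrite /= (eqP hc).
  by apply: connect1.
move=> hc.
have [bu [vu cu]] := Hk N u.
have [bv [vv cv]] := Hk N v.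
have ebuv : bu = bv.
  apply: val_inj; rewrite /= vu vv.
  by have := allNP (allNP Hrt (ltn_ord u)) (ltn_ord v); rewrite hc => /eqP.
apply: (connect_trans cu); rewrite ebuv.
by rewrite (sym_connect_sym esym).
Qed.

Lemma cconnE m m' :
  cconn (mkf (r + s) gA) (mkf (s + t) gB) m m' = [&& (m < N)%N, (m' < N)%N & cid m == cid m'].
Proof.
rewrite /cconn; apply/existsP/idP.
  move=> [u /existsP [v /and3P [/eqP eu /eqP ev c]]].
  by rewrite -eu -ev ltn_ord /= ltn_ord -connectE.
move=> /and3P [h1 h2 h3]; exists (Ordinal h1); apply/existsP; exists (Ordinal h2).
by rewrite /= !eqxx connectE.
Qed.

Variable h : nat -> nat.
Hypothesis Hhr : allN (r + t) (fun p => h p < r + t)%N.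
Hypothesis Hh : allN (r + t) (fun p => allN (r + t) (fun q =>
  ((q != p) && [&& (cvtx r s p < N)%N, (cvtx r s q < N)%N & cid (cvtx r s p) == cid (cvtx r s q)])
   == (q == h p))).

Lemma comp_funE : comp_fun (mkf (r + s) gA) (mkf (s + t) gB) = mkf (r + t) h.
Proof.
apply/ffunP => p; rewrite /comp_fun /mkf !ffunE.
have hp := allNP Hhr (ltn_ord p).
rewrite (ord_opt_some hp) /=.
case: pickP => [q /andP[hq hc] | H].
  rewrite cconnE in hc.
  have := allNP (allNP Hh (ltn_ord p)) (ltn_ord q).
  rewrite -val_eqE /= in hq; rewrite hq hc /= eq_sym => /eqP hq'.
  by apply: val_inj; rewrite /= (eqP hq').
have := H (Ordinal hp); rewrite cconnE.
have := allNP (allNP Hh (ltn_ord p)) hp.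
by rewrite eqxx -val_eqE /= => /eqP ->.
Qed.

Hypothesis Hlp : allN N (fun u => ((r <= u) && (u < r + s)) ==>
  has (fun v => (cid u == cid v) && ~~ ((r <= v) && (v < r + s) && (u <= v))) (iota 0 N))%N.

Lemma loopsE : loops (mkf (r + s) gA) (mkf (s + t) gB) = 0%N.
Proof.
rewrite /loops; apply/eqP; rewrite cards_eq0; apply/eqP/setP => u.
rewrite inE in_set0; apply/negbTE/negP => /andP[hm /forallP H].
have := allNP Hlp (ltn_ord u); rewrite hm /= => /hasP [v].
rewrite mem_iota add0n => /andP[_ hv] /andP[hc hn].
have := H (Ordinal hv); rewrite connectE /= hc /= => hh.
by rewrite hh in hn.
Qed.

End Gen.

Lemma diagE n (g : nat -> nat) :
  allN n (fun x => [&& g x < n, g x != x & g (g x) == x])%N -> is_diag (mkf n g).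
Proof.
move=> H; apply/forallP => x; have /and3P[h1 h2 h3] := allNP H (ltn_ord x).
by rewrite -!val_eqE !mkfE // ?(eqP h3) ?eqxx ?h2 // mkfE.
Qed.

Section BrauerFacts.
Variables (K : comPzRingType) (delta : K).

Lemma bcomp_bof r s t (gA gB : nat -> nat)
  (DA : is_diag (mkf (r + s) gA)) (DB : is_diag (mkf (s + t) gB)) :
  bcomp delta (bof K s t gB) (bof K r s gA) =
  [ffun e : diagram r t => (((val e == comp_fun (mkf (r + s) gA) (mkf (s + t) gB)) : nat)%:R
      * delta ^+ loops (mkf (r + s) gA) (mkf (s + t) gB))%R].
Proof.
apply/ffunP => e; rewrite !ffunE.
pose d1 : diagram r s := @exist _ (fun f => is_diag f) _ DA.
pose d2 : diagram s t := @exist _ (fun f => is_diag f) _ DB.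
rewrite (bigD1 d1) //= [X in (_ + X)%R]big1 ?addr0; last first.
  move=> d nd; apply: big1 => d' _; rewrite !ffunE.
  have -> : (val d == mkf (r + s) gA) = false.
    apply/negbTE; apply: contra nd => /eqP h; apply/eqP; exact: val_inj.
  by rewrite mulr0 mul0r; case: ifP.
rewrite (bigD1 d2) //= [X in (_ + X)%R]big1 ?addr0; last first.
  move=> d nd; rewrite !ffunE.
  have -> : (val d == mkf (s + t) gB) = false.
    apply/negbTE; apply: contra nd => /eqP h; apply/eqP; exact: val_inj.
  by rewrite !mul0r; case: ifP.
rewrite !ffunE /= !eqxx !mul1r eq_sym.
by case: eqP => _ /=; rewrite ?mul1r ?mul0r.
Qed.

Lemma bcomp_bofE r s t (gA gB h cid nxt : nat -> nat) :
  allN (r + s) (fun x => [&& gA x < r + s, gA x != x & gA (gA x) == x])%N ->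
  allN (s + t) (fun x => [&& gB x < s + t, gB x != x & gB (gB x) == x])%N ->
  allN (r + s + t) (fun a => allN (r + s + t) (fun b => ced r s gA gB a b ==> (cid a == cid b))) ->
  allN (r + s + t) (fun a => allN (r + s + t) (fun b => ced r s gA gB a b ==> ced r s gA gB b a)) ->
  allN (r + s + t) (fun a => (nxt a < r + s + t)%N && ((nxt a == a) || ced r s gA gB a (nxt a))) ->
  allN (r + s + t) (fun a => allN (r + s + t) (fun b => (cid a == cid b) ==> (iter (r + s + t) nxt a == iter (r + s + t) nxt b))) ->
  allN (r + t) (fun p => h p < r + t)%N ->
  allN (r + t) (fun p => allN (r + t) (fun q =>
   ((q != p) && [&& (cvtx r s p < r + s + t)%N, (cvtx r s q < r + s + t)%N & cid (cvtx r s p) == cid (cvtx r s q)])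
   == (q == h p))) ->
  allN (r + s + t) (fun u => ((r <= u) && (u < r + s)) ==>
    has (fun v => (cid u == cid v) && ~~ ((r <= v) && (v < r + s) && (u <= v))) (iota 0 (r + s + t)))%N ->
  bcomp delta (bof K s t gB) (bof K r s gA) = bof K r t h.
Proof.
move=> DA DB Hcl Hsym Hnx Hrt Hhr Hh Hlp.
have HA : allN (r + s) (fun m => gA m < r + s)%N.
  apply/allP => x; rewrite mem_iota add0n => /andP[_ hx].
  by case/and3P: (allNP DA hx).
have HB : allN (s + t) (fun m => gB m < s + t)%N.
  apply/allP => x; rewrite mem_iota add0n => /andP[_ hx].
  by case/and3P: (allNP DB hx).
rewrite (bcomp_bof (diagE DA) (diagE DB)).
rewrite (comp_funE HA HB Hcl Hsym Hnx Hrt Hhr Hh) (loopsE HA HB Hcl Hsym Hnx Hrt Hlp).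
by apply/ffunP => e; rewrite !ffunE expr0 mulr1.
Qed.

Definition gX := (fun p => (3 - p)%N).
Definition gcc := (fun p => (1 - p)%N).

Lemma bXX : bcomp delta (bX K) (bX K) = bId K 2.
Proof.
apply: (@bcomp_bofE 2 2 2 gX gX _
  (fun a => if a \in [:: 0; 3; 4]%N then 0%N else 1%N)
  (fun a => match a with 3 => 0 | 4 => 3 | 2 => 1 | 5 => 2 | _ => a end)%N);
  by vm_compute.
Qed.

Lemma bXcup : bcomp delta (bX K) (bcup K) = bcup K.
Proof.
apply: (@bcomp_bofE 0 2 2 gcc gX _ (fun _ => 0%N)
  (fun a => match a with 1 => 0 | 3 => 0 | 2 => 1 | _ => a end)%N);
  by vm_compute.
Qed.

Lemma bcapX : bcomp delta (bcap K) (bX K) = bcap K.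
Proof.
apply: (@bcomp_bofE 2 2 0 gX gcc _ (fun _ => 0%N)
  (fun a => match a with 3 => 0 | 2 => 3 | 1 => 2 | _ => a end)%N);
  by vm_compute.
Qed.

End BrauerFacts.

From Stdlib Require Import Setoid Morphisms.

Section AB.
Variables (K : comPzRingType) (delta : K).
Local Notation "a ≈ b" := (abeq delta a b) (at level 70).
Local Notation Aopp a := (Ascale (-1)%R a).

#[local] Instance abeq_equiv r s : Equivalence (@abeq K delta r s).
Proof.
split; [exact: abeq_refl | exact: abeq_sym | exact: abeq_trans].
Qed.
#[local] Instance Aadd_proper r s :
  Proper (@abeq K delta r s ==> @abeq K delta r s ==> @abeq K delta r s) (@Aadd K r s).
Proof. by move=> a a' h b b' h'; apply: abeq_add. Qed.
#[local] Instance Acomp_proper r s t :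
  Proper (@abeq K delta s t ==> @abeq K delta r s ==> @abeq K delta r t) (@Acomp K r s t).
Proof. by move=> a a' h b b' h'; apply: abeq_comp. Qed.
#[local] Instance Ascale_proper r s c :
  Proper (@abeq K delta r s ==> @abeq K delta r s) (@Ascale K r s c).
Proof. by move=> a a' h; apply: abeq_scale. Qed.

Lemma add0l r s (a : abterm K r s) : Aadd Azero a ≈ a.
Proof. rewrite abeq_addC abeq_add0; reflexivity. Qed.

Lemma addACA r s (a b c d : abterm K r s) :
  Aadd (Aadd a b) (Aadd c d) ≈ Aadd (Aadd a c) (Aadd b d).
Proof.
rewrite -(abeq_addA delta a b (Aadd c d)) (abeq_addA delta b c d) (abeq_addC delta b c).
rewrite -(abeq_addA delta c b d) (abeq_addA delta a c (Aadd b d)); reflexivity.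
Qed.

Lemma scale0 r s (a : abterm K r s) : Ascale 0 a ≈ Azero.
Proof.
have e : (1 + -1 = 0 :> K)%R by rewrite subrr.
rewrite -e abeq_scaleDl abeq_scale1 abeq_addN; reflexivity.
Qed.

Lemma comp0r r s t (a : abterm K s t) : Acomp a (@Azero K r s) ≈ Azero.
Proof.
transitivity (Acomp a (Ascale 0 (@Azero K r s))).
  by apply: abeq_comp; [reflexivity | symmetry; apply: scale0].
rewrite abeq_compZr scale0; reflexivity.
Qed.

Lemma comp0l r s t (a : abterm K r s) : Acomp (@Azero K s t) a ≈ Azero.
Proof.
transitivity (Acomp (Ascale 0 (@Azero K s t)) a).
  by apply: abeq_comp; [symmetry; apply: scale0 | reflexivity].
rewrite abeq_compZl scale0; reflexivity.
Qed.

Lemma oppD r s (a b : abterm K r s) : Aopp (Aadd a b) ≈ Aadd (Aopp a) (Aopp b).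
Proof. exact: abeq_scaleDr. Qed.

Lemma rearr r s (x y u z w v : abterm K r s) :
  Aadd (Aadd (Aadd x y) (Aopp (Aadd u z))) (Aadd (Aadd u w) (Aopp (Aadd x v)))
  ≈ Aadd (Aadd y w) (Aopp (Aadd z v)).
Proof.
rewrite !oppD.
rewrite (addACA (Aadd x y)) (addACA x y u w) (addACA (Aopp u)) (abeq_addC delta (Aopp u) (Aopp x)).
rewrite (addACA (Aadd x u)) (addACA x u) !abeq_addN add0l add0l.
reflexivity.
Qed.


Local Notation X := (AX0 K).
Local Notation A := (AH01 K).
Local Notation B := (AH02 K).
Local Notation C := (AH12 delta).
Definition conj (P : abterm K 2 2) : abterm K 2 2 := Acomp X (Acomp P X).

#[local] Instance conj_proper :
  Proper (@abeq K delta 2 2 ==> @abeq K delta 2 2) conj.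
Proof. move=> a a' h; rewrite /conj h; reflexivity. Qed.

Lemma XX : Acomp X X ≈ AId K 2.
Proof. by rewrite /AX0 /AId -(bXX delta); apply: abeq_i0. Qed.

Lemma conjM P Q : conj (Acomp P Q) ≈ Acomp (conj P) (conj Q).
Proof.
rewrite /conj -(abeq_compA delta X (Acomp P X) (Acomp X (Acomp Q X))).
rewrite -(abeq_compA delta P X (Acomp X (Acomp Q X))).
rewrite (abeq_compA delta X X (Acomp Q X)) XX abeq_idl.
rewrite -(abeq_compA delta P Q X); reflexivity.
Qed.

Lemma conjD P Q : conj (Aadd P Q) ≈ Aadd (conj P) (conj Q).
Proof. rewrite /conj abeq_compDl abeq_compDr; reflexivity. Qed.

Lemma conjN P : conj (Aopp P) ≈ Aopp (conj P).
Proof. rewrite /conj abeq_compZl abeq_compZr; reflexivity. Qed.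

Lemma conj0 : conj Azero ≈ Azero.
Proof. rewrite /conj comp0l comp0r; reflexivity. Qed.

Lemma conjB : conj B ≈ A.
Proof.
rewrite /conj /AH02 -/X.
rewrite -(abeq_compA delta X (Acomp A X) X) (abeq_compA delta X X (Acomp (Acomp A X) X)) XX abeq_idl.
rewrite -(abeq_compA delta A X X) XX abeq_idr; reflexivity.
Qed.

Local Notation U := (Atens (@AI0 K) (bcup K)).
Local Notation D := (Atens (@AI0 K) (bcap K)).

Lemma Cexp : C ≈ Aadd X (Aopp (Acomp U D)).
Proof.
rewrite /AH12 /bH abeq_tensDr abeq_tensZr.
rewrite (abeq_i0 delta (bcup K) (bcap K)); reflexivity.
Qed.

Lemma conjC : conj C ≈ C.
Proof.
rewrite Cexp conjD conjN.
have -> : conj X ≈ X.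
  rewrite /conj XX abeq_idr; reflexivity.
have -> : conj (Acomp U D) ≈ Acomp U D.
  rewrite /conj -(abeq_compA delta U D X) (abeq_compA delta X U (Acomp D X)).
  have -> : Acomp X U ≈ U.
    rewrite /AX0 (abeq_i0 delta (bX K) (bcup K)) (bXcup delta); reflexivity.
  have -> : Acomp D X ≈ D.
    rewrite /AX0 (abeq_i0 delta (bcap K) (bX K)) (bcapX delta); reflexivity.
  reflexivity.
reflexivity.
Qed.

Lemma E2 : Acomm B (Aadd A C) ≈ Azero.
Proof.
transitivity (conj (Acomm A (Aadd B C))).
  rewrite /Acomm conjD conjN !conjM conjD conjB conjC.
  reflexivity.
rewrite abeq_ii conj0; reflexivity.
Qed.

Lemma mainE : Acomm (Aadd A B) C ≈ Azero.
Proof.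
have e1 : Acomm A (Aadd B C) ≈
   Aadd (Aadd (Acomp A B) (Acomp A C)) (Aopp (Aadd (Acomp B A) (Acomp C A))).
  rewrite /Acomm abeq_compDr abeq_compDl; reflexivity.
have e2 : Acomm B (Aadd A C) ≈
   Aadd (Aadd (Acomp B A) (Acomp B C)) (Aopp (Aadd (Acomp A B) (Acomp C B))).
  rewrite /Acomm abeq_compDr abeq_compDl; reflexivity.
transitivity (Aadd (Aadd (Acomp A C) (Acomp B C)) (Aopp (Aadd (Acomp C A) (Acomp C B)))).
  rewrite /Acomm abeq_compDr abeq_compDl; reflexivity.
rewrite -(rearr (Acomp A B) (Acomp A C) (Acomp B A) (Acomp C A) (Acomp B C) (Acomp C B)) -e1 -e2 abeq_ii E2 abeq_add0; reflexivity.
Qed.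

End AB.

Local Open Scope ring_scope.

Theorem lemma2p10 (K : comPzRingType) (delta : K) :
  abeq delta (Acomm (Aadd (AH01 K) (AH02 K)) (AH12 delta)) (@Azero K 2 2).
Proof. exact: mainE. Qed.
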